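(* Let $(X,d)$ be a metric space, $F$ a semiflow on $X$, $\varepsilon>0$, $x\in X$, and let $\gamma:[0,T]\to X$ be an $\varepsilon$-chain from $x$ to $x$. Then there exists $\tau_*>0$ such that for every $T'\in(T-\tau_*,T)$ with $T'\ge1$ there is a $4\varepsilon$-chain $\gamma':[0,T']\to X$ from $x$ to $x$.
   Context: A semiflow on a metric space $(X,d)$ is a continuous map $F:[0,\infty)\times X\to X$, $(t,x)\mapsto F^t(x)$, with $F^0=\mathrm{id}$ and $F^{t+s}=F^t\circ F^s$ for all $t,s\ge0$. A curve is piecewise continuous if it is continuous except at finitely many points, at which one-sided limits exist. For $T\ge1$, a piecewise continuous curve $\gamma:[0,T]\to X$ is $\varepsilon$-close to $F$ if $d(\gamma(t+\tau),F^\tau(\gamma(t)))<\varepsilon$ for every $\tau\in[0,1]$ and $t\in[0,T-\tau]$. An $\varepsilon$-chain from $x$ to $y$ is a piecewise continuous $\gamma:[0,T]\to X$, $T\ge 1$, with $\gamma(0)=x$, $\gamma(T)=y$, and $\gamma$ $\varepsilon$-close to $F$. *)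

(* Defs.v *)
From Stdlib Require Import Reals Lra List.
Open Scope R_scope.

Record MetricSpace := {
  carrier :> Type;
  dist : carrier -> carrier -> R;
  dist_refl : forall x, dist x x = 0;
  dist_eq0 : forall x y, dist x y = 0 -> x = y;
  dist_sym : forall x y, dist x y = dist y x;
  dist_tri : forall x y z, dist x z <= dist x y + dist y z
}.

Arguments dist {m} _ _.

(* F : [0,oo) x X -> X continuous (product topology), F^0 = id,
   F^(t+s) = F^t o F^s for t,s >= 0.  Values of F at t < 0 are irrelevant. *)
Definition semiflow (X : MetricSpace) (F : R -> X -> X) : Prop :=
  (forall t x, 0 <= t -> forall e, 0 < e -> exists de, 0 < de /\
     forall s y, 0 <= s -> Rabs (s - t) < de -> dist y x < de ->
       dist (F s y) (F t x) < e) /\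
  (forall x, F 0 x = x) /\
  (forall t s x, 0 <= t -> 0 <= s -> F (t + s) x = F t (F s x)).

Definition cont_on_at (X : MetricSpace) (g : R -> X) (T p : R) : Prop :=
  forall e, 0 < e -> exists de, 0 < de /\
    forall s, 0 <= s <= T -> Rabs (s - p) < de -> dist (g s) (g p) < e.

Definition left_limit_exists (X : MetricSpace) (g : R -> X) (T p : R) : Prop :=
  exists L : X, forall e, 0 < e -> exists de, 0 < de /\
    forall s, 0 <= s <= T -> p - de < s < p -> dist (g s) L < e.

Definition right_limit_exists (X : MetricSpace) (g : R -> X) (T p : R) : Prop :=
  exists L : X, forall e, 0 < e -> exists de, 0 < de /\
    forall s, 0 <= s <= T -> p < s < p + de -> dist (g s) L < e.

(* gamma : [0,T] -> X (represented by a total function R -> X whose values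
   outside [0,T] are ignored) is piecewise continuous: continuous except at
   finitely many points, at which the one-sided limits (those that make sense
   inside [0,T]) exist. *)
Definition piecewise_continuous (X : MetricSpace) (g : R -> X) (T : R) : Prop :=
  exists l : list R,
    (forall p, 0 <= p <= T -> ~ In p l -> cont_on_at X g T p) /\
    (forall p, In p l -> 0 <= p <= T ->
       (0 < p -> left_limit_exists X g T p) /\
       (p < T -> right_limit_exists X g T p)).

Definition eps_close (X : MetricSpace) (F : R -> X -> X) (eps T : R)
  (g : R -> X) : Prop :=
  forall tau t, 0 <= tau <= 1 -> 0 <= t <= T - tau ->
    dist (g (t + tau)) (F tau (g t)) < eps.

Definition eps_chain (X : MetricSpace) (F : R -> X -> X) (eps : R) (x y : X)
  (T : R) (g : R -> X) : Prop :=
  1 <= T /\ g 0 = x /\ g T = y /\ piecewise_continuous X g T /\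
  eps_close X F eps T g.

(* Main.v *)
Require Import Defs.
From Stdlib Require Import Reals Lra List.
Open Scope R_scope.

Lemma cont_left (X : MetricSpace) g T p : cont_on_at X g T p -> left_limit_exists X g T p.
Proof.
  intros H. exists (g p). intros e he. destruct (H e he) as [de [hde H']].
  exists de; split; auto. intros s hs hs2. apply H'; auto.
  rewrite Rabs_left; lra.
Qed.

Lemma cont_right (X : MetricSpace) g T p : cont_on_at X g T p -> right_limit_exists X g T p.
Proof.
  intros H. exists (g p). intros e he. destruct (H e he) as [de [hde H']].
  exists de; split; auto. intros s hs hs2. apply H'; auto.
  rewrite Rabs_right; lra.
Qed.

Lemma pw_left (X : MetricSpace) g T p : piecewise_continuous X g T -> 0 < p <= T ->
  left_limit_exists X g T p.
Proof.
  intros [l [Hc Hl]] hp. destruct (in_dec Req_EM_T p l) as [i|n].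
  - apply (Hl p i); lra.
  - apply cont_left, Hc; auto; lra.
Qed.

Lemma pw_right (X : MetricSpace) g T p : piecewise_continuous X g T -> 0 <= p < T ->
  right_limit_exists X g T p.
Proof.
  intros [l [Hc Hl]] hp. destruct (in_dec Req_EM_T p l) as [i|n].
  - apply (Hl p i); lra.
  - apply cont_right, Hc; auto; lra.
Qed.

Theorem lemma3p4 (X : MetricSpace) (F : R -> X -> X) (eps : R) (x : X)
  (T : R) (gamma : R -> X) :
  semiflow X F -> 0 < eps -> eps_chain X F eps x x T gamma ->
  exists taus : R, 0 < taus /\
    forall T' : R, T - taus < T' < T -> 1 <= T' ->
      exists gamma' : R -> X, eps_chain X F (4 * eps) x x T' gamma'.
Proof.
  intros [Hcont [HF0 HFadd]] heps [hT [h0 [hTT [hpw hclose]]]].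
  destruct (pw_left X gamma T T hpw ltac:(lra)) as [L HL].
  destruct (Hcont 0 L (Rle_refl 0) eps heps) as [de2 [hde2 HF]].
  destruct (HL (Rmin eps de2)) as [de1 [hde1 HL1]].
  { apply Rmin_pos; lra. }
  exists (Rmin 1 (Rmin de1 de2)). split. { apply Rmin_pos; [lra | apply Rmin_pos; lra]. }
  intros T' hT' hT'1.
  pose proof (Rmin_l 1 (Rmin de1 de2)). pose proof (Rmin_r 1 (Rmin de1 de2)).
  pose proof (Rmin_l de1 de2). pose proof (Rmin_r de1 de2). pose proof (Rmin_l eps de2). pose proof (Rmin_r eps de2).
  assert (Hnear : Defs.dist x (gamma T') < 3*eps).
  { set (d := T - T').
    assert (h1 : Defs.dist (gamma (T' + d)) (F d (gamma T')) < eps).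
    { apply hclose; unfold d; split; lra. }
    unfold d in h1; replace (T' + (T - T')) with T in h1 by ring; rewrite hTT in h1.
    assert (h2 : Defs.dist (gamma T') L < Rmin eps de2) by (apply HL1; lra).
    assert (h3 : Defs.dist (F d (gamma T')) (F 0 L) < eps).
    { apply HF; unfold d. lra. rewrite Rminus_0_r, Rabs_right; lra. lra. }
    rewrite HF0 in h3.
    pose proof (Defs.dist_tri X x (F d (gamma T')) (gamma T')) as t1.
    pose proof (Defs.dist_sym X L (gamma T')) as t3.
    pose proof (Defs.dist_tri X x (F d (gamma T')) (gamma T')).
    pose proof (Defs.dist_tri X (F d (gamma T')) L (gamma T')).
    unfold d in *. lra. }
  destruct hpw as [l [Hc Hl]].
  assert (hpw : piecewise_continuous X gamma T) by (exists l; auto).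
  exists (fun t => if Rlt_dec t T' then gamma t else x).
  split; [lra|]. split.
  { destruct (Rlt_dec 0 T'); [exact h0 | lra]. }
  split. { destruct (Rlt_dec T' T'); [lra | reflexivity]. }
  split.
  - exists (T' :: l). split.
    + intros p hp hnin.
      assert (hpT : p <> T') by (intro; apply hnin; left; auto).
      assert (hnl : ~ In p l) by (intro; apply hnin; right; auto).
      assert (Hcp := Hc p ltac:(lra) hnl).
      intros e he. destruct (Hcp e he) as [de [hde H']].
      exists (Rmin de (T'-p)). split. { apply Rmin_pos; lra. }
      intros s hs hsp. pose proof (Rmin_l de (T'-p)). pose proof (Rmin_r de (T'-p)).
      pose proof (Rabs_def2 _ _ hsp) as [ha hb].
      destruct (Rlt_dec s T'); destruct (Rlt_dec p T'); try lra.
      apply H'; lra.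
    + intros p _ hp. split.
      * intros hp0. destruct (pw_left X gamma T p hpw ltac:(lra)) as [L0 HL0].
        exists L0. intros e he; destruct (HL0 e he) as [de [hde H']].
        exists de; split; auto. intros s hs hs2.
        destruct (Rlt_dec s T'); [apply H'; lra | lra].
      * intros hpT. destruct (pw_right X gamma T p hpw ltac:(lra)) as [L0 HL0].
        exists L0. intros e he; destruct (HL0 e he) as [de [hde H']].
        exists (Rmin de (T'-p)). split. { apply Rmin_pos; lra. }
        intros s hs hs2. pose proof (Rmin_l de (T'-p)). pose proof (Rmin_r de (T'-p)).
        destruct (Rlt_dec s T'); [apply H'; lra | lra].
  - intros tau t htau ht.
    destruct (Rlt_dec (t+tau) T') as [h1|h1]; destruct (Rlt_dec t T') as [h2|h2].
    + apply Rlt_trans with eps; [apply hclose; lra | lra].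
    + lra.
    + assert (he : t + tau = T') by lra.
      assert (hc := hclose tau t htau ltac:(lra)). rewrite he in hc.
      pose proof (Defs.dist_tri X x (gamma T') (F tau (gamma t))). lra.
    + assert (tau = 0) by lra. subst tau. rewrite HF0, Defs.dist_refl. lra.
Qed.
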